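(* Consider the single-block on-chain auction game described in the context with $n=1$ (so $N=\{0,1\}$) and reserve price $r=0$, where $F_0$ has density $f_0$ and $F_0(x)/f_0(x)$ is non-decreasing in $x$. Then the following strategy profile constitutes an equilibrium: (i) Bidder 1 bids truthfully, $b_1=v_1$, and tips $t_1(v_1)$, where $t_1(v_1)$ is the value of $t$ solving $(v_1-t)-\frac{F_0(t)}{f_0(t)}=0$. (ii) Bidder 0, having observed bidder 1's tip $t_1$ and knowing his value $v_0$, bribes (i.e. offers the proposer a payment of $t_1$ in exchange for excluding bidder 1's bid) if $t_1\le v_0$, and does not bribe if $t_1>v_0$; moreover bidder 0 submits a nonzero bid in the auction if and only if he bribes. (iii) The proposer accepts bidder 0's bribe whenever it is offered and then excludes bidder 1's bid; otherwise the proposer includes both bids.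
   Context: Single-block on-chain auction game. A seller has one indivisible good; there are $n+1$ buyers $N=\{0,1,\dots,n\}$, $n\ge 1$, with quasilinear utilities. Buyer $i$ has a private value $v_i$; $v_0$ is drawn from a distribution with CDF $F_0$ and density $f_0$, and $v_1,\dots,v_n$ are drawn i.i.d. from a distribution with CDF $F$ and density $f$, all independent, with supports equal to $[0,1]$; $n,F,F_0$ are common knowledge. The seller runs a sealed-bid second-price auction with reserve price $r$ in which bids are accepted in a single block built by a single profit-maximizing proposer. Timing: (1) the seller announces the auction; (2) buyers learn their values; (3) buyers $1,\dots,n$ simultaneously submit a private (sealed) bid $b_i$ and a publicly observed tip $t_i\ge 0$; (4) buyer 0 observes the tips $(t_1,\dots,t_n)$ and his value $v_0$, and may make the proposer a take-it-or-leave-it offer consisting of a subset $S\subseteq\{1,\dots,n\}$ and a payment $p$ to exclude the bids in $S$; buyer 0 also submits his own bid $b_0$; (5) the proposer accepts or rejects: if he accepts he includes exactly the bids of $N\setminus S$ and receives $p$, otherwise he includes all bids; the proposer accepts if and only if $p\ge\sum_{i\in S}t_i$; (6) the second-price auction is computed on the included bids: the highest included bid wins if it is at least $r$, paying the maximum of $r$ and the other included bids. A bidder pays his tip to the proposer if and only if his bid is included. ''Bribing'' (when all of $1,\dots,n$ are targeted) means offering $S=\{1,\dots,n\}$ with $p=\sum_{i=1}^n t_i$. Solution concept: perfect Bayesian equilibrium, restricted to profiles in which (a) bidders $1,\dots,n$ bid truthfully ($b_i=v_i$) and use a common tipping function of their value, and (b) bidder 0 bids his value if, given the observed tips, he assigns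 positive probability to winning, and otherwise bids $0$ or does not bid. Such profiles are called equilibria. *)

(* Defs.v *)
From HB Require Import structures.
From mathcomp Require Import all_boot all_order all_algebra.
From mathcomp Require Import all_classical all_reals all_analysis.
Set Implicit Arguments. Unset Strict Implicit. Unset Printing Implicit Defensive.
Import Order.TTheory GRing.Theory Num.Theory.
Local Open Scope classical_set_scope.
Local Open Scope ring_scope.

(* An action of bidder 0 (taken after observing bidder 1's tip and v0):
   - [offer] : [None] = no offer to the proposer; [Some (S, p)] = take-it-or-
     leave-it offer of payment [p] to exclude the set S ⊆ {1}, where
     [S = true] means S = {1} and [S = false] means S = ∅;
   - [bid0]  : [None] = bidder 0 does not bid; [Some b] = sealed bid b. *)
Record action0 (R : Type) := Action0 { offer : option (bool * R); bid0 : option R }.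

Section Game.
Variable R : realType.

(* Proposer's rule: accept iff p >= sum of tips of the excluded bids. *)
Definition accepts (t1 : R) (o : option (bool * R)) : bool :=
  match o with
  | None => false
  | Some (s, p) => (if s then t1 else 0) <= p
  end.

Definition payment (t1 : R) (o : option (bool * R)) : R :=
  match o with
  | Some (_, p) => if accepts t1 o then p else 0
  | None => 0
  end.

Definition excluded1 (t1 : R) (o : option (bool * R)) : bool :=
  match o with
  | Some (true, p) => t1 <= p
  | _ => false
  end.

(* Sealed-bid second-price auction with reserve r on the included bids
   c0 (bidder 0) and c1 (bidder 1).  Result: [None] = no sale;
   [Some (w, price)] with w = true iff bidder 1 wins.
   Ties are broken in favour of bidder 1. *)
Definition auction (r : R) (c0 c1 : option R) : option (bool * R) :=
  match c0, c1 with
  | None, None => None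
  | Some b0, None => if r <= b0 then Some (false, r) else None
  | None, Some b1 => if r <= b1 then Some (true, r) else None
  | Some b0, Some b1 =>
      if b0 <= b1 then (if r <= b1 then Some (true, Num.max r b0) else None)
      else (if r <= b0 then Some (false, Num.max r b1) else None)
  end.

(* included bid of bidder 1 (b1 = None: bidder 1 submits no bid) *)
Definition incl1 (b1 : option R) (t1 : R) (a : action0 R) : option R :=
  if excluded1 t1 (offer a) then None else b1.

Definition u1 (r v1 : R) (b1 : option R) (t1 : R) (a : action0 R) : R :=
  let c1 := incl1 b1 t1 a in
  (match auction r (bid0 a) c1 with Some (true, p) => v1 - p | _ => 0 end)
  - (if c1 is Some _ then t1 else 0).

Definition u0 (r v0 : R) (b1 : option R) (t1 : R) (a : action0 R) : R :=
  let c1 := incl1 b1 t1 a in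
  (match auction r (bid0 a) c1 with Some (false, p) => v0 - p | _ => 0 end)
  - payment t1 (offer a).

Definition wins0 (r : R) (b1 : option R) (t1 : R) (a : action0 R) : bool :=
  match auction r (bid0 a) (incl1 b1 t1 a) with
  | Some (false, _) => true
  | _ => false
  end.

Definition EU1 (r : R) (f0 : R -> R) (sigma0 : R -> R -> action0 R)
    (v1 : R) (b1 : option R) (t1 : R) : \bar R :=
  (\int[@lebesgue_measure R]_(x in `[0%R, 1%R])
      ((u1 r v1 b1 t1 (sigma0 t1 x)) * f0 x)%:E)%E.

(* Perfect Bayesian equilibrium (n = 1) restricted to profiles in which bidder 1
   bids truthfully and tips tau(v1), and bidder 0 plays sigma0 (a function of
   the observed tip and of v0); the proposer follows [accepts].
   Bidder 0's beliefs about v1 after observing tip t are given by the point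
   belief beta t ∈ [0,1], Bayes-consistent on path (beta (tau v) = v). *)
Definition equilibrium (r : R) (f0 : R -> R) (tau : R -> R)
    (sigma0 : R -> R -> action0 R) : Prop :=
  (forall v, 0 <= v <= 1 -> 0 <= tau v) /\
  exists beta : R -> R,
    (forall t, 0 <= beta t <= 1) /\
    (forall v, 0 <= v <= 1 -> beta (tau v) = v) /\
    (forall t v0, 0 <= t -> 0 <= v0 <= 1 ->
       let a := sigma0 t v0 in
       if wins0 r (Some (beta t)) t (Action0 (offer a) (Some v0))
       then bid0 a = Some v0
       else (bid0 a = None \/ bid0 a = Some 0)) /\
    (forall t v0, 0 <= t -> 0 <= v0 <= 1 -> forall a : action0 R,
       u0 r v0 (Some (beta t)) t a <= u0 r v0 (Some (beta t)) t (sigma0 t v0)) /\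
    (forall v1, 0 <= v1 <= 1 -> forall (b : option R) (t : R), 0 <= t ->
       (EU1 r f0 sigma0 v1 b t <= EU1 r f0 sigma0 v1 (Some v1) (tau v1))%E).

Definition sigma0_prop1 (t1 v0 : R) : action0 R :=
  if t1 <= v0 then Action0 (Some (true, t1)) (Some v0) else Action0 None None.

Definition cdf_with_density (F f : R -> R) : Prop :=
  measurable_fun setT f /\ (forall x, 0 <= f x) /\
  (forall x, ((F x)%:E = \int[@lebesgue_measure R]_(y in `]-oo, x]) (f y)%:E)%E) /\
  F 0 = 0 /\ F 1 = 1 /\
  (forall a b, 0 <= a -> a < b -> b <= 1 -> F a < F b).

End Game.

(* Main.v *)
Require Import Defs.
From HB Require Import structures.
From mathcomp Require Import all_boot all_order all_algebra.
From mathcomp Require Import all_classical all_reals all_analysis.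
From mathcomp Require Import measurable_realfun lra.
Import Order.TTheory GRing.Theory Num.Theory.
Local Open Scope classical_set_scope.
Local Open Scope ring_scope.

Section S.
Variable R : realType.
Variables (F0 f0 : R -> R).
Hypothesis mf : measurable_fun setT f0.
Hypothesis f0ge : forall x, 0 <= f0 x.
Hypothesis hF : forall x, ((F0 x)%:E = \int[@lebesgue_measure R]_(y in `]-oo, x]) (f0 y)%:E)%E.

Let mF (D : set R) : measurable D -> measurable_fun D (EFin \o f0).
Proof. move=> mD; apply/measurable_EFinP; exact: measurable_funS mf. Qed.

Lemma FA a b : a <= b ->
  ((F0 b - F0 a)%:E = \int[@lebesgue_measure R]_(y in `]a, b]) (f0 y)%:E)%E.
Proof.
move=> ab.
have := hF b.
rewrite (@itv_bndbnd_setU _ _ _ (BRight a)) ?bnd_simp //.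
rewrite ge0_integral_setU //=; last 3 first.
- apply: mF; apply: measurableU; exact: measurable_itv.
- by move=> x _; have := f0ge x; rewrite -lee_fin.
- apply/disj_setPS => x [] /=; rewrite !in_itv /= => xa /andP[ax _].
  by move: (lt_le_trans ax xa); rewrite ltxx.
match goal with |- context [GRing.add ?A _] => have -> : A = (F0 a)%:E by rewrite hF end.
move=> Hb; rewrite EFinB Hb addeAC subee // add0e; reflexivity.
Qed.


Hypothesis F00 : F0 0 = 0.

Lemma Fcc t : 0 <= t ->
  ((F0 t)%:E = \int[@lebesgue_measure R]_(y in `[0%R, t]) (f0 y)%:E)%E.
Proof.
move=> t0.
rewrite hF (@itv_bndbnd_setU _ _ _ (BLeft 0)) ?bnd_simp //.
rewrite ge0_integral_setU //=; last 3 first.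
- apply: mF; apply: measurableU; exact: measurable_itv.
- by move=> x _; have := f0ge x; rewrite -lee_fin.
- apply/disj_setPS => x [] /=; rewrite !in_itv /= => x0 /andP[x0' _].
  by move: (lt_le_trans x0 x0'); rewrite ltxx.
rewrite integral_itv_bndo_bndc; last by apply: mF; exact: measurable_itv.
match goal with |- context [GRing.add ?A _] => have -> : A = (F0 0)%:E by rewrite hF end.
by rewrite F00 add0e.
Qed.

Lemma Eint t c : 0 <= t <= 1 -> 0 <= c ->
  (\int[@lebesgue_measure R]_(x in `[0%R, 1%R]) (((if x < t then c else 0) * f0 x)%:E)
   = (c * F0 t)%:E)%E.
Proof.
move=> /andP[t0 t1] c0.
transitivity (\int[@lebesgue_measure R]_(x in `[0%R, 1%R]) (((fun x => (c * f0 x)%:E) \_ `]-oo, t[) x))%E.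
  apply: eq_integral => x _; rewrite /restrict /patch (_ : (x \in _) = (x < t)); last by rewrite mem_setE in_itv.
  by case: ifP => _; rewrite ?mul0r.
rewrite -integral_mkcondr.
have -> : `[0%R, 1%R]%classic `&` `]-oo, t[%classic = `[0, t[%classic :> set R.
  apply/seteqP; split => x /=; rewrite !in_itv /=.
    by case => /andP[x0 _] xt; rewrite x0 xt.
  by case/andP => x0 xt; rewrite x0 xt (le_trans (ltW xt) t1).
under eq_integral => x _ do rewrite EFinM.
rewrite ge0_integralZl_EFin //; last 2 first.
- by move=> x _; have := f0ge x; rewrite -lee_fin.
- apply: mF; exact: measurable_itv.
rewrite integral_itv_bndo_bndc; last by apply: mF; exact: measurable_itv.
by rewrite -Fcc // EFinM.
Qed.

Lemma Eint_le0 t c : c <= 0 ->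
  (\int[@lebesgue_measure R]_(x in `[0%R, 1%R]) (((if x < t then c else 0) * f0 x)%:E) <= 0)%E.
Proof.
move=> c0.
have E x : ((if x < t then c else 0) * f0 x)%:E = (- ((if x < t then - c else 0) * f0 x)%:E)%E.
  by case: ifP => _; rewrite ?mul0r ?oppe0 // mulNr EFinN oppeK.
under eq_integral => x _ do rewrite E.
rewrite integral_ge0N.
  rewrite oppe_le0; apply: integral_ge0 => x _.
  by rewrite lee_fin; apply: mulr_ge0 => //; case: ifP => _; rewrite ?oppr_ge0.
by move=> x _; rewrite lee_fin; apply: mulr_ge0 => //; case: ifP => _; rewrite ?oppr_ge0.
Qed.

Lemma intA a b al : a <= b -> 0 <= al ->
  ((al * (F0 b - F0 a))%:E = \int[@lebesgue_measure R]_(x in `]a, b]) ((al * f0 x)%:E))%E.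
Proof.
move=> ab a0; rewrite EFinM FA //.
under [RHS]eq_integral => x _ do rewrite EFinM.
rewrite ge0_integralZl_EFin //; last 2 first.
- by move=> x _; have := f0ge x; rewrite -lee_fin.
- apply: mF; exact: measurable_itv.
Qed.

Lemma intC a b be : a <= b ->
  ((be * (b - a))%:E = \int[@lebesgue_measure R]_(x in `]a, b]) (be%:E))%E.
Proof.
move=> ab.
have K := (@integral_cst _ _ R (@lebesgue_measure R) `]a,b]%classic (measurable_itv _) be%:E). rewrite K.
rewrite EFinM; congr (_ * _)%E; symmetry.
apply: eq_trans; first exact: (lebesgue_measure_itv (R:=R) `]a, b]).
rewrite /= lte_fin.
case: ltP => [_|ba]; first by rewrite EFinB.
have -> : b = a by apply/eqP; rewrite eq_le ab ba.
by rewrite subrr.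
Qed.

Lemma BndU a b al be : a <= b -> 0 <= al ->
  (forall x, a < x <= b -> al * f0 x <= be) -> al * (F0 b - F0 a) <= be * (b - a).
Proof.
move=> ab a0 H; rewrite -lee_fin intA // intC //.
apply: ge0_le_integral => //.
all: try (move=> x; rewrite /= in_itv /= => Hx; rewrite lee_fin).
all: first [exact: (H _ Hx) | by rewrite mulr_ge0 | idtac].
all: try (apply/measurable_EFinP; apply: measurable_funM => //; apply: measurable_funS mf => //; exact: measurable_itv).
Qed.

Lemma BndL a b al be : a <= b -> 0 <= al -> 0 <= be ->
  (forall x, a < x <= b -> be <= al * f0 x) -> be * (b - a) <= al * (F0 b - F0 a).
Proof.
move=> ab a0 b0 H; rewrite -lee_fin intA // intC //.
apply: ge0_le_integral => //.
all: try (move=> x; rewrite /= in_itv /= => Hx; rewrite lee_fin).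
all: first [exact: (H _ Hx) | by rewrite mulr_ge0 | idtac].
all: try (apply/measurable_EFinP; apply: measurable_funM => //; apply: measurable_funS mf => //; exact: measurable_itv).
Qed.
End S.
Ltac splitifs := repeat (case: ifP => /=; [move=> ?| move/negbT; rewrite -?ltNge -?leNgt => ?]).

Lemma u0_le (R : realType) (v0 b t M : R) (a : action0 R) : 0 <= t -> 0 <= b ->
  v0 - t <= M -> 0 <= M -> v0 - b <= M -> u0 0 v0 (Some b) t a <= M.
Proof.
move=> t0 b0 h1 h2 h3.
case: a => [[[[] p]|] [b1|]];
  rewrite /u0 /incl1 /excluded1 /auction /payment /accepts /=; splitifs;
  rewrite ?(max_r b0); try lra.
Qed.

Lemma u1_pt (R : realType) (v1 t x : R) (b : option R) :
  u1 0 v1 b t (sigma0_prop1 t x) = if x < t then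
    (match b with Some b1 => if 0 <= b1 then v1 - t else - t | None => 0 end) else 0.
Proof.
rewrite /sigma0_prop1 /u1 /incl1 /excluded1 /auction; case: b => [b1|];
  splitifs; try lra.
Qed.

Lemma wins_sig (R : realType) (t v0 b : R) : 0 <= v0 -> 0 <= b -> (t <= v0 \/ v0 <= b) ->
  let a := sigma0_prop1 t v0 in
       if wins0 0 (Some b) t (Action0 (offer a) (Some v0))
       then bid0 a = Some v0
       else (bid0 a = None \/ bid0 a = Some 0).
Proof.
move=> h0 hb hh /=; rewrite /sigma0_prop1; case: (leP t v0) => h /=.
  by rewrite /wins0 /incl1 /= lexx /= h0.
have hv : v0 <= b by case: hh => // ?; lra.
by rewrite /wins0 /incl1 /= hv hb; left.
Qed.

Lemma u0_sig (R : realType) (t v0 b : R) : 0 <= v0 -> 0 <= b ->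
  u0 0 v0 (Some b) t (sigma0_prop1 t v0) = if t <= v0 then v0 - t else 0.
Proof.
move=> h0 hb; rewrite /sigma0_prop1 /u0 /incl1 /excluded1 /auction /payment /accepts.
splitifs; try lra.
Qed.


Theorem proposition1 (R : realType) (F0 f0 F f : R -> R) (tau : R -> R) :
  cdf_with_density F0 f0 ->
  cdf_with_density F f ->
  (forall x, 0 < x <= 1 -> 0 < f0 x) ->
  (forall x y, 0 <= x -> x <= y -> y <= 1 -> F0 x / f0 x <= F0 y / f0 y) ->
  (forall v, 0 <= v <= 1 ->
     0 <= tau v <= 1 /\ (v - tau v) - F0 (tau v) / f0 (tau v) = 0) ->
  equilibrium 0 f0 tau (@sigma0_prop1 R) /\
  (forall t v0, 0 <= t -> t <= v0 ->
     offer (@sigma0_prop1 R t v0) = Some (true, t) /\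
     excluded1 t (offer (@sigma0_prop1 R t v0)) = true /\ bid0 (@sigma0_prop1 R t v0) = Some v0) /\
  (forall t v0, v0 < t ->
     offer (@sigma0_prop1 R t v0) = None /\
     excluded1 t (offer (@sigma0_prop1 R t v0)) = false /\ bid0 (@sigma0_prop1 R t v0) = None).
Proof.
move=> [mf0 [f0ge [hF [F00 [F01 Fmono]]]]] _ f0pos hG htau.
have Fle x y : 0 <= x -> x <= y -> y <= 1 -> F0 x <= F0 y.
  move=> x0 xy y1; have [->|nxy] := eqVneq x y; first by [].
  by apply/ltW/Fmono => //; rewrite lt_neqAle nxy xy.
have F0ge x : 0 <= x -> x <= 1 -> 0 <= F0 x by move=> x0 x1; rewrite -F00; apply: Fle.
have G0 : F0 0 / f0 0 = 0 by rewrite F00 mul0r.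
have Gge x : 0 <= x -> x <= 1 -> 0 <= F0 x / f0 x.
  by move=> x0 x1; rewrite -G0; apply: hG.
pose beta t := if t < 0 then 0 else if t <= 1 then Num.min 1 (t + F0 t / f0 t) else 1.
have beta01 t : 0 <= beta t <= 1.
  rewrite /beta; case: (ltP t 0) => ht0; first by rewrite lexx ler01.
  case: (leP t 1) => ht1; last by rewrite ler01 lexx.
  have := Gge t ht0 ht1 => g0.
  by rewrite le_min ler01 ge_min lexx /=; apply/andP; split => //; lra.
have betaY t y : 0 <= t -> y <= 1 -> y <= t -> y <= beta t.
  move=> t0 y1 yt; rewrite /beta; case: (ltP t 0) => ht0; first lra.
  case: (leP t 1) => ht1 //; have := Gge t t0 ht1 => g0.
  by rewrite le_min y1 /=; lra.
have betaT v : 0 <= v <= 1 -> beta (tau v) = v.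
  move=> hv; have [/andP[t0 t1] E] := htau v hv.
  rewrite /beta ltNge t0 /= t1.
  have -> : tau v + F0 (tau v) / f0 (tau v) = v by lra.
  by apply: min_r; case/andP: hv.
split.
  split; first by move=> v hv; case: (htau v hv) => /andP[].
  exists beta; split; first by [].
  split; first by [].
  split.
    move=> t v0 t0 /andP[v00 v01].
    have /andP[b0 _] := beta01 t.
    apply: wins_sig => //.
    have [tv|vt] := leP t v0; first by left.
    by right; apply: betaY => //; apply: ltW.
  split.
    move=> t v0 t0 /andP[v00 v01] a.
    have /andP[b0 _] := beta01 t.
    rewrite u0_sig //.
    apply: u0_le => //.
    - by case: ifP => //; lra.
    - by case: ifP => //; lra.
    - have [tv|vt] := leP t v0.
        have : t <= beta t by apply: betaY => //; lra.
        lra.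
      have : v0 <= beta t by apply: betaY => //; lra.
      lra.
  move=> v1 /andP[v10 v11] b t t0.
  have [/andP[ta0 ta1] E] := htau v1 (ltac:(by rewrite v10 v11)).
  set ta := tau v1 in ta0 ta1 E *.
  have Gta : v1 - ta = F0 ta / f0 ta by lra.
  have Gta0 : 0 <= v1 - ta by rewrite Gta; apply: Gge.
  have key s : 0 <= s -> s <= v1 -> (v1 - s) * F0 s <= (v1 - ta) * F0 ta.
    move=> s0 sv; case: (leP ta s) => h.
      have := @BndU R F0 f0 mf0 f0ge hF ta s (v1 - ta) (F0 s) h Gta0.
      have H : forall x, ta < x <= s -> (v1 - ta) * f0 x <= F0 s.
        move=> x /andP[xa xb].
        have fx : 0 < f0 x by apply: f0pos; apply/andP; split; lra.
        have := hG ta x ta0 (ltW xa) ltac:(lra).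
        rewrite -Gta ler_pdivlMr // => hx.
        have : F0 x <= F0 s by apply: Fle; lra.
        lra.
      move/(_ H) => HH; nra.
    have := @BndL R F0 f0 mf0 f0ge hF s ta (v1 - ta) (F0 s) (ltW h) Gta0 (F0ge s s0 ltac:(lra)).
    have H : forall x, s < x <= ta -> F0 s <= (v1 - ta) * f0 x.
      move=> x /andP[xa xb].
      have fx : 0 < f0 x by apply: f0pos; apply/andP; split; lra.
      have := hG x ta ltac:(lra) xb ta1.
      rewrite -Gta ler_pdivrMr // => hx.
      have : F0 s <= F0 x by apply: Fle; lra.
      lra.
    move/(_ H) => HH; nra.
  have EU1E (bb : option R) (tt : R) : EU1 0 f0 (@sigma0_prop1 R) v1 bb tt =
    (\int[@lebesgue_measure R]_(x in `[0%R, 1%R]) (((if x < tt then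
      (match bb with Some b1 => if 0 <= b1 then v1 - tt else - tt | None => 0 end) else 0) * f0 x)%:E))%E.
    by apply: eq_integral => x _; rewrite u1_pt.
  rewrite !EU1E v10 (@Eint R F0 f0 mf0 f0ge hF F00 ta (v1 - ta)) ?ta0 ?ta1 //.
  have R0 : (0 <= ((v1 - ta) * F0 ta)%:E)%E by rewrite lee_fin mulr_ge0 // F0ge.
  case: b => [b1|]; last by apply: (le_trans _ R0); apply: (@Eint_le0 R f0 f0ge t 0).
  case: (leP 0 b1) => hb1; last by apply: (le_trans _ R0); apply: (@Eint_le0 R f0 f0ge t (- t)); lra.
  case: (leP (v1 - t) 0) => hvt; first by apply: (le_trans _ R0); apply: (@Eint_le0 R f0 f0ge t (v1 - t)).
  rewrite (@Eint R F0 f0 mf0 f0ge hF F00 t (v1 - t)) ?lee_fin; first by apply: key; lra.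
  - apply/andP; split; lra.
  - lra.
split.
  move=> t v0 t0 tv; rewrite /sigma0_prop1 tv /=; split => //; split => //; exact: lexx.
move=> t v0 vt; rewrite /sigma0_prop1 leNgt vt /=; done.
Qed.
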